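(* A relaxed binary tree $C$ is a compacted binary tree if and only if there are no two distinct vertices $u\neq v$ of $C$ having the same left out-neighbour and the same right out-neighbour. Moreover, if $C$ is not a compacted tree, then such a pair $(u,v)$ exists in which $v$ is a cherry and $u$ precedes $v$ in postorder.
   Context: A (rooted, plane) binary tree is either a leaf or an internal node with an ordered pair (left, right) of binary subtrees; postorder visits left subtree, right subtree, then root. A relaxed binary tree of size $n$ is obtained from a binary tree $T$ with $n$ internal nodes (its spine) by keeping the left-most leaf and turning every other leaf $\ell$ into a pointer to a vertex of $T$ which is an internal node or the left-most leaf and which precedes $\ell$ in postorder. It is regarded as a directed acyclic graph whose vertices are the internal nodes of $T$ and the left-most leaf; each internal node has a left and a right out-edge, going to the corresponding child in $T$ if that child is an internal node or the left-most leaf, and otherwise to the target of the pointer replacing that child (the endpoints of these edges are the left and right out-neighbours, or children, of the node in $C$). For each vertex $u$ define a binary tree $B(u)$: a single leaf if $u$ is the left-most leaf, otherwise the binary tree with left subtree $B(v)$ and right subtree $B(w)$, where $v,w$ are the left and right out-neighbours of $u$. A compacted binary tree is a relaxed binary tree with $B(u)$ not isomorphic to $B(v)$ for all distinct vertices $u\ne v$. An internal node is a cherry if both of its children in the spine $T$ are leaves and neither of them is the left-most leaf. *)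

(* Defs.v *)
From mathcomp Require Import all_boot.
Set Implicit Arguments. Unset Strict Implicit. Unset Printing Implicit Defensive.

Inductive btree := BLeaf | BNode of btree & btree.

(* Positions in a tree are paths from the root: false = go left, true = go right. *)
Fixpoint sub (t : btree) (p : seq bool) : option btree :=
  match p, t with
  | [::], _ => Some t
  | false :: p', BNode l _ => sub l p'
  | true :: p', BNode _ r => sub r p'
  | _ :: _, BLeaf => None
  end.

Fixpoint postorder (t : btree) : seq (seq bool) :=
  match t with
  | BLeaf => [:: [::]]
  | BNode l r => [seq false :: p | p <- postorder l] ++
                 [seq true :: p | p <- postorder r] ++ [:: [::]]
  end.

Definition precedes (t : btree) (p q : seq bool) : bool :=
  index p (postorder t) < index q (postorder t).

Definition internal_pos (t : btree) (p : seq bool) : bool :=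
  if sub t p is Some (BNode _ _) then true else false.

Definition leaf_pos (t : btree) (p : seq bool) : bool :=
  if sub t p is Some BLeaf then true else false.

Definition lml_pos (t : btree) (p : seq bool) : bool :=
  leaf_pos t p && all (fun b => b == false) p.

Definition is_vertex (t : btree) (p : seq bool) : bool :=
  internal_pos t p || lml_pos t p.

(* A relaxed binary tree: a spine together with pointers ptr l for every
   leaf l other than the left-most leaf (values of ptr elsewhere are ignored). *)
Record relaxed := Relaxed { spine : btree; ptr : seq bool -> seq bool }.

Definition valid_relaxed (C : relaxed) : Prop :=
  forall l, leaf_pos (spine C) l -> ~~ lml_pos (spine C) l ->
    is_vertex (spine C) (ptr C l) /\ precedes (spine C) (ptr C l) l.

Definition child (C : relaxed) (p : seq bool) (b : bool) : seq bool :=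
  let q := rcons p b in
  if is_vertex (spine C) q then q else ptr C q.

(* B(u), computed by recursion with fuel; out-neighbours strictly precede
   their source in postorder, so fuel = number of positions suffices. *)
Fixpoint Bf (C : relaxed) (k : nat) (p : seq bool) : btree :=
  match k with
  | 0 => BLeaf
  | k'.+1 => if internal_pos (spine C) p
             then BNode (Bf C k' (child C p false)) (Bf C k' (child C p true))
             else BLeaf
  end.

Definition B (C : relaxed) (p : seq bool) : btree :=
  Bf C (size (postorder (spine C))) p.

(* Isomorphism of plane binary trees is equality of btree. *)
Definition compacted (C : relaxed) : Prop :=
  valid_relaxed C /\
  forall u v, is_vertex (spine C) u -> is_vertex (spine C) v -> u <> v ->
    B C u <> B C v.

Definition cherry (t : btree) (p : seq bool) : bool :=
  [&& internal_pos t p,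
      leaf_pos t (rcons p false), leaf_pos t (rcons p true),
      ~~ lml_pos t (rcons p false) & ~~ lml_pos t (rcons p true)].

(* Main.v *)
Require Import Defs.
From Stdlib Require Import Classical.
From mathcomp Require Import all_boot zify.
Set Implicit Arguments. Unset Strict Implicit.

Fixpoint po_lt (p q : seq bool) : bool :=
  match p, q with
  | [::], _ => false
  | _ :: _, [::] => true
  | a :: p', b :: q' => if a == b then po_lt p' q' else ~~ a
  end.

Lemma po_lt_irr p : po_lt p p = false.
Proof. by elim: p => //= a p IH; rewrite eqxx. Qed.

Lemma po_lt_desc p a s : po_lt (p ++ a :: s) p.
Proof. by elim: p => //= b p IH; rewrite eqxx. Qed.

Lemma po_key u v b : u <> v -> po_lt u v -> po_lt (rcons v b) (rcons u b) ->
  b = false /\ exists s, u = v ++ true :: s.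
Proof.
elim: v u => [|c v IH] [|a u] //=.
- move=> _ _; case: b; case: a => //= _; split => //; by exists u.
- move=> hne; case: (eqVneq a c) hne => [->|hac] hne.
  + rewrite ?eqxx => h1 h2. have hne' : u <> v by move=> e; apply: hne; rewrite e.
    have [-> [s ->]] := IH u hne' h1 h2. split => //; by exists s.
  + rewrite ?eq_sym ?(negbTE hac). by case: a c hac {hne} => [] [].
Qed.

Lemma sub_cat t p q : sub t (p ++ q) = if sub t p is Some t' then sub t' q else None.
Proof. by elim: p t => [|a p IH] [|l r] //=; case: a. Qed.

Lemma mem_mapcons (a : bool) (s : seq (seq bool)) (x : seq bool) : (x \in [seq a :: p | p <- s]) =
   (if x is b :: x' then (b == a) && (x' \in s) else false).
Proof.
case: x => [|b x] /=; first by apply/mapP => -[].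
apply/mapP/andP => [[y ys [-> ->]] | [/eqP -> xs]]; first by rewrite eqxx.
by exists x.
Qed.

Lemma mem_post t p : (p \in postorder t) = (isSome (sub t p)).
Proof.
elim: t p => [|l IHl r IHr] [|a p] /=.
- by [].
- by rewrite inE; case: a.
- by rewrite !mem_cat !mem_mapcons inE.
- rewrite !mem_cat !mem_mapcons inE /=; case: a => /=; by rewrite ?IHl ?IHr orbF.
Qed.

Lemma idx_node l r p : p \in postorder (BNode l r) ->
  index p (postorder (BNode l r)) =
  match p with [::] => size (postorder l) + size (postorder r)
  | false :: p' => index p' (postorder l)
  | true :: p' => size (postorder l) + index p' (postorder r) end.
Proof.
have hf : forall a : bool, injective (@cons bool a) by move=> a x y [->].
move=> hp. rewrite /= !index_cat !mem_mapcons.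
case: p hp => [|[] p] hp /=.
- by rewrite !size_map addn0.
- move: hp; rewrite mem_post /= => hp. by rewrite -mem_post in hp; rewrite hp size_map index_map.
- move: hp; rewrite mem_post /= => hp. by rewrite -mem_post in hp; rewrite hp index_map.
Qed.

Lemma idx_lt t x : x \in postorder t -> index x (postorder t) < size (postorder t).
Proof. by rewrite index_mem. Qed.

Lemma idx_post t p q : p \in postorder t -> q \in postorder t ->
  (index p (postorder t) < index q (postorder t)) = po_lt p q.
Proof.
elim: t p q => [|l IHl r IHr] p q.
- rewrite !inE => /eqP -> /eqP ->; by [].
- move=> hp hq; rewrite (idx_node hp) (idx_node hq).
  move: hp hq; rewrite !mem_post /=.
  case: p => [|[] p]; case: q => [|[] q] //= hp hq;
  rewrite -?mem_post in hp hq; rewrite ?ltn_add2l ?IHl ?IHr //.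
  all: try (move: (idx_lt hp) => ?).
  all: try (move: (idx_lt hp) => ?).
  all: try (move: (idx_lt hq) => ?).
  all: try (move: (idx_lt hq) => ?).
  all: first [lia | apply: negbTE; lia].
Qed.

Lemma sub_nil t : sub t [::] = Some t.
Proof. by case: t. Qed.

Lemma internal_sub t p : internal_pos t p -> exists l r, sub t p = Some (BNode l r).
Proof. rewrite /internal_pos; case: (sub t p) => [[|l r]|] //; by exists l, r. Qed.

Lemma leaf_sub t p : leaf_pos t p -> sub t p = Some BLeaf.
Proof. rewrite /leaf_pos; by case: (sub t p) => [[|l r]|]. Qed.

Lemma vertex_mem t p : is_vertex t p -> p \in postorder t.
Proof.
rewrite /is_vertex /lml_pos mem_post => /orP [/internal_sub [l [r ->]] //|/andP [/leaf_sub -> _]] //.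
Qed.

Lemma leaf_mem t p : leaf_pos t p -> p \in postorder t.
Proof. by rewrite mem_post => /leaf_sub ->. Qed.

Lemma lml_not_int t p : lml_pos t p -> internal_pos t p = false.
Proof. by rewrite /lml_pos /internal_pos => /andP [/leaf_sub -> _]. Qed.

Lemma lml_uniq t p q : lml_pos t p -> lml_pos t q -> p = q.
Proof.
rewrite /lml_pos /leaf_pos.
elim: p t q => [|a p IH] t [|b q] //=.
- case: t => [|l r] //=; by case: b.
- case: t => [|l r] //=; by case: a.
- case: t => [|l r] /=; first by case: a.
  move=> /and3P [h1 h2 h3] /and3P [h4 h5 h6].
  case: a h1 h2 h3 => // h1 _ h3; case: b h4 h5 h6 => // h4 _ h6.
  by rewrite (IH l q) ?h1 ?h3 ?h4 ?h6.
Qed.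

Lemma sub_rcons t p b : internal_pos t p -> isSome (sub t (rcons p b)).
Proof.
move/internal_sub => [l [r E]]. rewrite -cats1 sub_cat E. by case: b => /=; rewrite sub_nil.
Qed.

Lemma nonvertex_leaf t p b : internal_pos t p -> ~~ is_vertex t (rcons p b) ->
  leaf_pos t (rcons p b) && ~~ lml_pos t (rcons p b).
Proof.
move=> /(sub_rcons b); rewrite /is_vertex negb_or => hs /andP [hi ->].
move: hi hs; rewrite /internal_pos /leaf_pos andbT; by case: (sub t _) => [[|l r]|].
Qed.

Lemma rcons_prec t p b : internal_pos t p -> precedes t (rcons p b) p.
Proof.
move=> hi; rewrite /precedes idx_post.
- by rewrite -cats1 po_lt_desc.
- by rewrite mem_post sub_rcons.
- by rewrite vertex_mem // /is_vertex hi.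
Qed.

Lemma child_vertex C p b : valid_relaxed C -> internal_pos (spine C) p ->
  is_vertex (spine C) (child C p b) /\ precedes (spine C) (child C p b) p.
Proof.
move=> H hi; rewrite /child; case: ifP => hv.
  by split => //; apply: rcons_prec.
have /andP [hl hnl] := nonvertex_leaf hi (negbT hv).
have [h1 h2] := H _ hl hnl; split => //.
move: h2 (rcons_prec b hi); rewrite /precedes; exact: ltn_trans.
Qed.

Lemma Bf_fuel C k1 k2 p : valid_relaxed C -> is_vertex (spine C) p ->
  index p (postorder (spine C)) < k1 -> index p (postorder (spine C)) < k2 ->
  Bf C k1 p = Bf C k2 p.
Proof.
move=> H; elim: k1 k2 p => [|k1 IH] [|k2] p //= hv h1 h2.
case: ifP => hi //; congr BNode; apply: IH;
  have [hv' hp'] := child_vertex false H hi; have [hv'' hp''] := child_vertex true H hi;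
  move: hp' hp''; rewrite /precedes => *; by [| lia].
Qed.

Lemma B_node C p : valid_relaxed C -> internal_pos (spine C) p ->
  B C p = BNode (B C (child C p false)) (B C (child C p true)).
Proof.
move=> H hi; have hv : is_vertex (spine C) p by rewrite /is_vertex hi.
have hs := idx_lt (vertex_mem hv).
rewrite /B.
have := child_vertex false H hi; have := child_vertex true H hi.
rewrite /precedes; move=> [hv1 hp1] [hv0 hp0].
move: hs hp1 hp0 (Bf_fuel) => hs hp1 hp0 hf.
move: (size _) hs => [|n] hs //.
transitivity (BNode (Bf C n (child C p false)) (Bf C n (child C p true))); first by rewrite /= hi.
congr BNode; apply: hf => //; lia.
Qed.

Lemma B_leaf C p : lml_pos (spine C) p -> B C p = BLeaf.
Proof. move=> h; rewrite /B; case: (size _) => [|n] //=; by rewrite lml_not_int. Qed.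

Lemma B_leaf_inv C p : valid_relaxed C -> is_vertex (spine C) p -> B C p = BLeaf ->
  lml_pos (spine C) p.
Proof.
move=> H /orP [hi|//]; by rewrite B_node.
Qed.

Lemma key_vertex C u v b : valid_relaxed C -> internal_pos (spine C) u ->
  internal_pos (spine C) v -> u <> v -> child C u b = child C v b ->
  precedes (spine C) u v -> is_vertex (spine C) (rcons v b) ->
  b = false /\ exists s, u = v ++ true :: s.
Proof.
move=> H hu hv hne hc hp hvb.
move: hc; rewrite {2}/child hvb /child.
case: ifP => hub.
  by move/rcons_inj; case => e; case: hne.
have /andP [hl hnl] := nonvertex_leaf hu (negbT hub).
have [_ h2] := H _ hl hnl => e; rewrite e in h2.
apply: po_key => //.
- move: hp; rewrite /precedes idx_post //; apply: vertex_mem; by rewrite /is_vertex ?hu ?hv.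
- move: h2; rewrite /precedes idx_post //; [exact: vertex_mem | exact: leaf_mem].
Qed.

Lemma cherry_of C u v : valid_relaxed C -> internal_pos (spine C) u ->
  internal_pos (spine C) v -> u <> v ->
  child C u false = child C v false -> child C u true = child C v true ->
  precedes (spine C) u v -> cherry (spine C) v.
Proof.
move=> H hu hv hne h0 h1 hp.
have ht : ~~ is_vertex (spine C) (rcons v true).
  apply/negP => hvb; by have [] := key_vertex H hu hv hne h1 hp hvb.
have hf : ~~ is_vertex (spine C) (rcons v false).
  apply/negP => hvb; have [_ [s es]] := key_vertex H hu hv hne h0 hp hvb.
  have /andP [hl _] := nonvertex_leaf hv ht.
  move: hu; rewrite es -cat_rcons /internal_pos sub_cat (leaf_sub hl).
  clear es; by case: s => [|[] s].
rewrite /cherry hv.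
have /andP [-> ->] := nonvertex_leaf hv ht.
by have /andP [-> ->] := nonvertex_leaf hv hf.
Qed.

Definition good C := exists u v, internal_pos (spine C) u /\ internal_pos (spine C) v /\
          u <> v /\ child C u false = child C v false /\
          child C u true = child C v true /\
          cherry (spine C) v /\ precedes (spine C) u v.

Lemma core C n : valid_relaxed C -> forall u v, index v (postorder (spine C)) < n ->
  is_vertex (spine C) u -> is_vertex (spine C) v -> precedes (spine C) u v ->
  B C u = B C v -> good C.
Proof.
move=> H; elim: n => [|n IH] u v // hn hu hv hp hB.
have hne : u <> v by move=> e; rewrite e /precedes ltnn in hp.
case/orP: hv => [hiv | hlv]; last first.
  have hlu : lml_pos (spine C) u by apply: (B_leaf_inv H hu); rewrite hB (B_leaf hlv).
  by case: hne; apply: lml_uniq hlu hlv.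
have hiu : internal_pos (spine C) u.
  case/orP: hu => // hlu; move: hB; by rewrite (B_leaf hlu) (B_node H hiv).
move: hB; rewrite (B_node H hiu) (B_node H hiv) => -[hB0 hB1].
have step : forall b, B C (child C u b) = B C (child C v b) ->
    child C u b <> child C v b -> good C.
  move=> b hb hc.
  have [hvu hpu] := child_vertex b H hiu; have [hvv hpv] := child_vertex b H hiv.
  have mu := vertex_mem hvu; have mv := vertex_mem hvv.
  move: hpu hpv hp; rewrite /precedes => hpu hpv hp.
  case: (ltngtP (index (child C u b) (postorder (spine C)))
                (index (child C v b) (postorder (spine C)))) => hlt.
  - apply: (IH (child C u b) (child C v b)) => //; lia.
  - apply: (IH (child C v b) (child C u b) _ hvv hvu _ (esym hb)) => //; lia.
  - exfalso; apply: hc; by rewrite -(nth_index [::] mu) hlt nth_index.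
case: (eqVneq (child C u false) (child C v false)) => [e0|]; last by move/eqP; apply: step.
case: (eqVneq (child C u true) (child C v true)) => [e1|]; last by move/eqP; apply: step.
exists u, v; split; [done|split; [done|split; [done|split; [done|split; [done|split; [exact: (cherry_of H hiu hiv hne e0 e1 hp)|done]]]]]].
Qed.

Lemma bad_good C u v : valid_relaxed C -> is_vertex (spine C) u -> is_vertex (spine C) v ->
  u <> v -> B C u = B C v -> good C.
Proof.
move=> H hu hv hne hB.
have mu := vertex_mem hu; have mv := vertex_mem hv.
case: (ltngtP (index u (postorder (spine C))) (index v (postorder (spine C)))) => hlt.
- exact: (@core C (index v (postorder (spine C))).+1 H u v).
- exact: (@core C (index u (postorder (spine C))).+1 H v u).
- by case: hne; rewrite -(nth_index [::] mu) hlt nth_index.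
Qed.

Unset Implicit Arguments.
Theorem proposition2p8 (C : relaxed) :
  valid_relaxed C ->
  (compacted C <->
     ~ (exists u v, internal_pos (spine C) u /\ internal_pos (spine C) v /\
          u <> v /\ child C u false = child C v false /\
          child C u true = child C v true))
  /\
  (~ compacted C ->
     exists u v, internal_pos (spine C) u /\ internal_pos (spine C) v /\
          u <> v /\ child C u false = child C v false /\
          child C u true = child C v true /\
          cherry (spine C) v /\ precedes (spine C) u v).
Proof.
move=> H; split; [split|].
- move=> [_ hinj] [u [v [hu [hv [hne [h0 h1]]]]]].
  apply: (hinj u v); rewrite ?/is_vertex ?hu ?hv //.
  by rewrite (B_node H hu) (B_node H hv) h0 h1.
- move=> hno; split => // u v hu hv hne hB; apply: hno.
  have [u' [v' [h1 [h2 [h3 [h4 [h5 _]]]]]]] := bad_good H hu hv hne hB.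
  by exists u', v'.
- move=> hnc; apply: Classical_Prop.NNPP => hng; apply: hnc; split => // u v hu hv hne hB.
  by apply: hng; apply: (bad_good H hu hv hne hB).
Qed.
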